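(* Let $w$ be analytic on the open unit disk $D=\{|z|<1\}$ and suppose $w$ has a hard singularity at a point $z_1$ with $|z_1|=1$. Then the angular derivative $w^{\cdot}(z)=izw'(z)$ also has a hard singularity at $z_1$.
   Context: An inner analytic function is one analytic on the open unit disk centered at the origin; its angular derivative is $w^{\cdot}(z)=izw'(z)$. A singular point of $w$ on the unit circle is a point where $w$ fails to be analytic; a singularity at $z_1$ on the unit circle is soft if $\lim_{z\to z_1}w(z)$ (from within the open disk) exists and is finite, and hard otherwise. *)

(* Defs.v *)
From HB Require Import structures.
From mathcomp Require Import all_boot all_order all_algebra.
From mathcomp Require Import complex.
From mathcomp Require Import all_classical all_reals all_analysis.
Set Implicit Arguments. Unset Strict Implicit. Unset Printing Implicit Defensive.
Import Order.TTheory GRing.Theory Num.Theory.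
Import numFieldNormedType.Exports.
Local Open Scope classical_set_scope.
Local Open Scope ring_scope.
Local Open Scope complex_scope.

(** The complex numbers, viewed as a numFieldType (hence a normed module
    over themselves, so that [derive] is the complex derivative). *)
Definition C (R : realType) : numFieldType := R[i].

Definition unit_disk (R : realType) : set (C R) := [set z | `|z| < 1].

Definition analytic_on (R : realType) (f : C R -> C R) (A : set (C R)) :=
  forall z, A z -> derivable f z 1.

Definition angular_derivative (R : realType) (w : C R -> C R) : C R -> C R :=
  fun z => (('i : R[i]) : C R) * z * (derive w z 1).

Definition regular_point (R : realType) (w : C R -> C R) (z1 : C R) :=
  exists (r : C R) (g : C R -> C R), 0 < r /\
    analytic_on g (ball z1 r) /\
    (forall z, ball z1 r z -> unit_disk z -> g z = w z).

Definition singular_point (R : realType) (w : C R -> C R) (z1 : C R) :=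
  `|z1| = 1 /\ ~ regular_point w z1.

Definition soft_singularity (R : realType) (w : C R -> C R) (z1 : C R) :=
  singular_point w z1 /\
  exists l : C R, w @ within (@unit_disk R) (nbhs z1) --> l.

Definition hard_singularity (R : realType) (w : C R -> C R) (z1 : C R) :=
  singular_point w z1 /\
  ~ (exists l : C R, w @ within (@unit_disk R) (nbhs z1) --> l).

(* Main.v *)
Require Import Defs.
From HB Require Import structures.
From mathcomp Require Import all_boot all_order all_algebra.
From mathcomp Require Import complex.
From mathcomp Require Import all_classical all_reals all_analysis.
From mathcomp Require Import ring lra.
Import Order.TTheory GRing.Theory Num.Theory.
Import numFieldNormedType.Exports.
Local Open Scope classical_set_scope.
Local Open Scope ring_scope.
Local Open Scope complex_scope.
Notation cRe := complex.Re.
Notation cIm := complex.Im.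
Lemma normCE (R : realType) (z : R[i]) : `|z| = (cRe `|z|)%:C.
Proof. by rewrite normc_def. Qed.
Lemma normC_real (R : realType) (k : R) : `|k%:C| = `|k|%:C.
Proof. by rewrite normc_def /= expr0n /= addr0 sqrtr_sqr. Qed.

Lemma normc_ge_Im (R : realType) (x : R[i]) : `|cIm x|%:C <= `|x|.
Proof.
by case: x => a b; simpc; rewrite -sqrtr_sqr ler_wsqrtr // lerDr sqr_ge0.
Qed.

Lemma normi (R : realType) : `|'i : R[i]| = 1.
Proof. by rewrite normc_def /= expr0n expr1n add0r sqrtr1. Qed.

Lemma norm_le_ReIm (R : realType) (z : R[i]) : `|z| <= (`|cRe z| + `|cIm z|)%:C.
Proof.
rewrite [in leLHS](complexE z) rmorphD /=.
apply: le_trans (ler_normD _ _) _.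
by rewrite normrM normi mul1r !normC_real.
Qed.

Lemma C_complete (R : realType) (F : set_system (C R)) (PF : ProperFilter F) :
  cauchy F -> exists l : C R, F --> l.
Proof.
move=> /cauchyP cF.
set fRe := (fun x : C R => cRe x).
set fIm := (fun x : C R => cIm x).
have hRe : cvg (fRe @ F).
  apply: cauchy_cvg; apply/cauchyP => e e0.
  have e0' : (0 : C R) < e%:C by rewrite ltcR.
  have [x Fx] := cF _ e0'.
  exists (cRe x).
  suff : F (fun y => ball (cRe x) e (fRe y)) by [].
  apply: filterS Fx => y.
  rewrite -!ball_normE /ball_ /= => H.
  have := le_lt_trans (normc_ge_Re (x - y)) H.
  by rewrite ltcR; case: x {H} => ? ?; case: y => ? ?.
have hIm : cvg (fIm @ F).
  apply: cauchy_cvg; apply/cauchyP => e e0.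
  have e0' : (0 : C R) < e%:C by rewrite ltcR.
  have [x Fx] := cF _ e0'.
  exists (cIm x).
  suff : F (fun y => ball (cIm x) e (fIm y)) by [].
  apply: filterS Fx => y.
  rewrite -!ball_normE /ball_ /= => H.
  have := le_lt_trans (@normc_ge_Im _ (x - y)) H.
  by rewrite ltcR; case: x {H} => ? ?; case: y => ? ?.
exists ((lim (fRe @ F)) +i* (lim (fIm @ F))).
apply/cvg_ballP => e e0.
have Ee : e = (cRe e)%:C.
  by case: e e0 => a b; rewrite ltcE /= => /andP[/eqP -> _].
have r0 : 0 < cRe e by move: e0; rewrite ltcE => /andP[].
move/cvgrPdist_lt : hRe => /(_ _ (divr_gt0 r0 (ltr0n _ 2))) hRe.
move/cvgrPdist_lt : hIm => /(_ _ (divr_gt0 r0 (ltr0n _ 2))) hIm.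
have reB : forall u v : C R, cRe (u - v) = cRe u - cRe v by move=> [? ?] [? ?].
have imB : forall u v : C R, cIm (u - v) = cIm u - cIm v by move=> [? ?] [? ?].
near=> x.
rewrite -ball_normE /ball_ /=.
apply: le_lt_trans (@norm_le_ReIm _ _) _.
rewrite Ee ltcR.
have h1 : `|lim (fRe @ F) - cRe x| < cRe e / 2 by near: x.
have h2 : `|lim (fIm @ F) - cIm x| < cRe e / 2 by near: x.
rewrite reB imB /=.
by rewrite [cRe e](splitr (cRe e)); apply: ltrD.
Unshelve. all: by end_near.
Qed.

Lemma algE' (R : realType) (x : C R) : (x%:A : C R) = x.
Proof. exact: mulr1. Qed.
Lemma algER (R : realType) (x : R) : (x%:A : R) = x.
Proof. exact: mulr1. Qed.
Lemma scaleE' (R : realType) (x y : C R) : (x *: y : C R) = x * y.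
Proof. by []. Qed.
Lemma scaleER (R : realType) (x y : R) : (x *: y : R) = x * y.
Proof. by []. Qed.

Lemma cRe_realM (R : realType) (k : R) (z : C R) : cRe (k%:C * z) = k * cRe z.
Proof. by case: z => a b /=; rewrite !mul0r subr0. Qed.
Lemma cReB (R : realType) (u v : C R) : cRe (u - v) = cRe u - cRe v.
Proof. by case: u; case: v. Qed.

Lemma seg_derive (R : realType) (f : C R -> C R) (p d c : C R) (t0 : R) :
  derivable f (p + t0%:C * d) 1 ->
  is_derive t0 (1:R) (fun t : R => cRe (c * f (p + t%:C * d)))
     (cRe (c * d * derive f (p + t0%:C * d) 1)).
Proof.
set q := p + t0%:C * d; set D := derive f q 1 => Hd.
set L := cRe (c * d * D).
set G := (fun h : R => h^-1 *: (((fun t : R => cRe (c * f (p + t%:C * d))) \o shift t0) (h *: 1)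
   - cRe (c * f (p + t0%:C * d)))).
suff GL : G @ 0^' --> L.
  apply: DeriveDef; first by apply/cvg_ex; exists L.
  exact: cvg_lim.
have Gh : forall h : R, h != 0 -> d != 0 ->
   G h = cRe (c * d * ((h%:C * d)^-1 *: ((f \o shift q) ((h%:C * d) *: 1) - f q))).
  move=> h h0 d0; rewrite /G /= /q.
  have E : p + (h + t0)%:C * d = (h%:C * d) *: 1 + (p + t0%:C * d).
    rewrite algE' rmorphD /=; ring.
  rewrite algER E !scaleER scaleE'.
  set u := f _; set v := f (p + _).
  rewrite scaleE'.
  have hC : h%:C != 0 :> C R by rewrite (eqr_nat _ _ _ ) || (apply: contra h0 => /eqP[->]).
  have -> : c * d * ((h%:C * d)^-1 * (u - v)) = (h^-1)%:C * (c * u - c * v).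
    rewrite fmorphV /=; field; by apply/andP.
  by rewrite cRe_realM cReB.
apply/cvgrPdist_lt => e e0.
have [d0|d0] := eqVneq d 0.
  apply: nearW => h; rewrite /G /L /= d0 !mulr0 !mul0r !addr0 subrr.
  by rewrite scaler0 subr0 normr0.
set K := cRe `|c * d|.
have K0 : 0 <= K by rewrite /K normc_def /= sqrtr_ge0.
set e' := e / (K + 1).
have e'0 : (0:C R) < e'%:C by rewrite ltcR divr_gt0 // ltr_wpDl.
move: Hd; rewrite /derivable => /cvgrPdist_lt /(_ _ e'0).
rewrite near_withinE => /nbhs_ballP [del del0 Hdel].
rewrite near_withinE; apply/nbhs_ballP.
have delE : del = (cRe del)%:C.
  move: del0; rewrite /= ltcE => /andP[/eqP H _].
  by apply/eqP; rewrite eq_complex /= eqxx H; apply/eqP.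
have delr : 0 < cRe del by move: del0; rewrite /= ltcE => /andP[].
have dn0 : 0 < cRe `|d|.
  by rewrite -ltcR -normCE normr_gt0.
exists (cRe del / cRe `|d|); first by rewrite /= divr_gt0.
move=> h; rewrite -ball_normE /ball_ /= sub0r normrN => hb hne.
rewrite Gh //.
have hk : ball (0 : C R) del (h%:C * d : C R).
  rewrite -ball_normE /ball_ /= sub0r normrN normrM normC_real normCE delE.
  by rewrite -rmorphM ltcR -ltr_pdivlMr.
have hkne : (h%:C * d : C R) != 0.
  by rewrite mulf_neq0 // ; apply: contra hne => /eqP[->].
move: (Hdel _ hk hkne) => Hlt.
rewrite /L -cReB -mulrBr.
apply: (@le_lt_trans _ _ (K * e')).
  rewrite -lecR; apply: le_trans (normc_ge_Re _) _.
  rewrite normrM [`|c * d|]normCE -/K rmorphM /=.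
  apply: ler_wpM2l; first by rewrite lecR.
  exact: ltW Hlt.
rewrite /e' mulrA ltr_pdivrMr ?ltr_wpDl // mulrC ltr_pM2l //.
by rewrite ltrDl ltr01.
Qed.

Lemma lipschitz (R : realType) (f : C R -> C R) (S : set (C R)) (M : R) (a b : C R) :
  (forall t : R, 0 <= t <= 1 -> S (a + t%:C * (b - a))) ->
  (forall z, S z -> derivable f z 1 /\ `|derive f z 1| <= M%:C) ->
  `|f b - f a| <= M%:C * `|b - a|.
Proof.
move=> Sseg Hf.
set x := f b - f a; set c := (x^*)%C; set d := b - a.
set phi := fun t : R => cRe (c * f (a + t%:C * d)).
set df := fun t : R => cRe (c * d * derive f (a + t%:C * d) 1).
have Hder : forall t : R, 0 <= t <= 1 -> is_derive t (1:R) phi (df t).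
  by move=> t /Sseg /Hf [H _]; apply: seg_derive.
have [xi xi01 E] : exists2 xi, xi \in `]0, 1[%R & phi 1 - phi 0 = df xi * (1 - 0).
  apply: MVT; first exact: ltr01.
    move=> t; rewrite in_itv /= => /andP[t0 t1]; apply: Hder.
    by rewrite !ltW.
  apply: derivable_within_continuous => t; rewrite in_itv /= => /andP[t0 t1].
  by have [] := Hder t (introT andP (conj t0 t1)).
move: xi01; rewrite in_itv /= => /andP[xi0 xi1].
have [Hxi HM] := Hf _ (Sseg xi (introT andP (conj (ltW xi0) (ltW xi1)))).
have E1 : phi 1 - phi 0 = (cRe `|x|)^+2.
  rewrite /phi.
  have -> : a + 1%:C * d = b by rewrite rmorph1 mul1r /d addrC subrK.
  have -> : a + 0%:C * d = a by rewrite rmorph0 mul0r addr0.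
  rewrite -cReB -mulrBr -/x /c mulrC -sqr_normc normCE -rmorphXn.
  by [].
have nge0 : forall z : C R, 0 <= cRe `|z| by move=> z; rewrite normc_def /= sqrtr_ge0.
have H1 : (df xi)%:C <= `|x| * `|d| * M%:C.
  apply: le_trans (_ : `|df xi|%:C <= _); first by rewrite lecR ler_norm.
  apply: le_trans (normc_ge_Re _) _.
  rewrite !normrM normcJ; by apply: ler_wpM2l.
rewrite [`|x|]normCE [`|d|]normCE -!rmorphM lecR in H1.
rewrite normCE [`|d|]normCE -rmorphM lecR.
rewrite normCE lecR in HM.
have := nge0 x; have := nge0 d; have := nge0 ('D_1 f (a + xi%:C * (b - a))).
move: E; rewrite E1 subr0 mulr1 => E.
rewrite -E in H1.
set n := cRe `|x| in H1 E *; set nd := cRe `|d| in H1 *.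
move=> hD hd hn.
have M0 : 0 <= M by apply: le_trans HM.
have [n0|n0] := eqVneq n 0; first by rewrite n0 mulr_ge0.
have np : 0 < n by rewrite lt_def n0 hn.
rewrite -(ler_pM2l np); nra.
Qed.

Lemma posC (R : realType) (e : C R) : 0 < e -> e = (cRe e)%:C /\ 0 < cRe e.
Proof.
rewrite ltcE => /andP[/eqP H H2]; split => //.
by apply/eqP; rewrite eq_complex /= eqxx H; apply/eqP.
Qed.

Lemma disk_point (R : realType) (z1 : C R) (del : C R) : `|z1| = 1 -> 0 < del ->
  exists a : C R, unit_disk a /\ ball z1 del a.
Proof.
move=> hz1 /posC [dE dpos].
set s := Num.min (cRe del) 1 / 2.
have s0 : 0 < s by rewrite divr_gt0 // lt_min dpos ltr01.
have s1 : s < 1.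
  rewrite /s ltr_pdivrMr // mul1r; apply: (@le_lt_trans _ _ 1); first by rewrite ge_min lexx orbT.
  by rewrite ltr1n.
have sd : s < cRe del.
  rewrite /s ltr_pdivrMr //; apply: (@le_lt_trans _ _ (cRe del)); first by rewrite ge_min lexx.
  by rewrite -{1}[cRe del]mulr1 ltr_pM2l // ltr1n.
exists ((1 - s)%:C * z1); split.
  rewrite /unit_disk /= normrM hz1 mulr1 normC_real ltcE /= eqxx /=.
  by rewrite ger0_norm ?subr_ge0 ?ltW // ltrBlDr ltrDl.
rewrite -ball_normE /ball_ /=.
have -> : z1 - (1 - s)%:C * z1 = s%:C * z1 by rewrite rmorphB /= rmorph1; ring.
by rewrite normrM hz1 mulr1 normC_real dE ltcR gtr0_norm.
Qed.

Lemma disk_closure (R : realType) (z1 : C R) : `|z1| = 1 ->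
  closure (@unit_disk R) z1.
Proof.
move=> hz1 B /nbhs_ballP [del del0 HB].
have [a [Da Ba]] := @disk_point _ z1 del hz1 del0.
by exists a; split => //; apply: HB.
Qed.

Lemma oneC (R : realType) : (1 : C R) = (1 : R)%:C.
Proof. by []. Qed.

Lemma convex_norm (R : realType) (u v : C R) (t r : R) : 0 <= t <= 1 ->
  `|u| < r%:C -> `|v| < r%:C -> `|(1 - t)%:C * u + t%:C * v| < r%:C.
Proof.
move=> /andP[t0 t1] hu hv.
apply: le_lt_trans (ler_normD _ _) _.
rewrite !normrM !normC_real [`|u|]normCE [`|v|]normCE -!rmorphM -rmorphD ltcR.
rewrite [`|u|]normCE ltcR in hu; rewrite [`|v|]normCE ltcR in hv.
have t1' : 0 <= 1 - t by rewrite subr_ge0.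
rewrite (ger0_norm t0) (ger0_norm t1').
set x := cRe `|u| in hu *; set y := cRe `|v| in hv *.
set m := Num.max x y.
have xm : x <= m by rewrite le_max lexx.
have ym : y <= m by rewrite le_max lexx orbT.
have mr : m < r by rewrite gt_max hu hv.
have h1 : 0 <= (1 - t) * (m - x) by rewrite mulr_ge0 // subr_ge0.
have h2 : 0 <= t * (m - y) by rewrite mulr_ge0 // subr_ge0.
apply: (@le_lt_trans _ _ m) => //.
nra.
Qed.

Lemma KL (R : realType) (w : C R -> C R) (z1 : C R) :
  analytic_on w (@unit_disk R) -> `|z1| = 1 ->
  (exists l : C R, angular_derivative w @ within (@unit_disk R) (nbhs z1) --> l) ->
  exists l : C R, w @ within (@unit_disk R) (nbhs z1) --> l.
Proof.
move=> Aw hz1 [l Hl].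
have PF : ProperFilter (within (@unit_disk R) (nbhs z1)).
  by apply: within_nbhs_proper; exact: disk_closure.
apply: C_complete.
move: Hl => /cvgrPdist_lt /(_ 1 ltr01).
rewrite near_withinE => /nbhs_ballP [d1 d1pos Hd1].
have [d1E d1r] := @posC _ _ d1pos.
set del : R := Num.min (cRe d1) (1/2).
have del0 : 0 < del by rewrite lt_min d1r divr_gt0.
set M : R := 2 * (cRe `|l| + 1).
have nge0 : forall z : C R, 0 <= cRe `|z| by move=> z; rewrite normc_def /= sqrtr_ge0.
have M0 : 0 <= M by rewrite mulr_ge0 // addr_ge0.
have Hbound : forall z, ball z1 del%:C z -> unit_disk z ->
    derivable w z 1 /\ `|derive w z 1| <= M%:C.
  move=> z bz Dz; split; first exact: Aw.
  move: bz; rewrite -ball_normE /ball_ /= => bz.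
  have bz1 : ball z1 d1 z.
    rewrite -ball_normE /ball_ /=; apply: lt_le_trans bz _.
    by rewrite d1E lecR ge_min lexx.
  have := Hd1 _ bz1 Dz.
  rewrite /angular_derivative => H.
  set D := derive w z 1 in H *.
  have H2 : `|'i * z * D| < `|l| + 1.
    have -> : 'i * z * D = l - (l - 'i * z * D) by rewrite opprB addrC subrK.
    by apply: le_lt_trans (ler_normB _ _) _; rewrite ltrD2l.
  rewrite !normrM normi mul1r in H2.
  have H3 := ler_normD z (z1 - z).
  rewrite [z + _]addrC subrK hz1 in H3.
  have H2' : cRe `|z| * cRe `|D| < cRe `|l| + 1.
    by rewrite -ltcR rmorphM rmorphD /= -!normCE.
  have H3' : 1 <= cRe `|z| + cRe `|z1 - z|.
    by rewrite -lecR rmorphD /= -!normCE.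
  have bz' : cRe `|z1 - z| < del.
    by rewrite -ltcR -normCE.
  rewrite [`|D|]normCE lecR.
  have hdel : del <= 1/2 by rewrite ge_min lexx orbT.
  have := nge0 D; have := nge0 z.
  rewrite /M; set nz := cRe `|z| in H2' H3' *; set nD := cRe `|D| in H2' *.
  move=> hz hD.
  have hz2 : 1 <= 2 * nz by lra.
  have : 0 <= (2 * nz - 1) * nD by rewrite mulr_ge0 // subr_ge0.
  nra.
apply: cauchy_exP => e e0.
have [eE er] := @posC _ _ e0.
set rho : R := Num.min del (cRe e / (2 * M + 2)).
have M2 : 0 < 2 * M + 2 by rewrite ltr_wpDl // mulr_ge0.
have rho0 : 0 < rho by rewrite lt_min del0 divr_gt0.
have rhodel : rho <= del by rewrite ge_min lexx.
have rhoe : rho * (2 * M + 2) <= cRe e.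
  by rewrite -ler_pdivlMr // ge_min lexx orbT.
have rho0C : (0 : C R) < rho%:C by rewrite ltcR.
have [a0 [Da0 Ba0]] := @disk_point _ z1 rho%:C hz1 rho0C.
exists (w a0).
suff : \forall z \near within (@unit_disk R) (nbhs z1), ball (w a0) e (w z) by [].
rewrite near_withinE; apply/nbhs_ballP; exists rho%:C => //.
move=> z bz Dz.
move: bz Ba0; rewrite -!ball_normE /ball_ /= => bz Ba0.
have bzd : `|z1 - z| < del%:C by apply: lt_le_trans bz _; rewrite lecR.
have bad : `|z1 - a0| < del%:C by apply: lt_le_trans Ba0 _; rewrite lecR.
have lip : `|w a0 - w z| <= M%:C * `|a0 - z|.
  apply: (@lipschitz _ w (fun y => ball z1 del%:C y /\ unit_disk y)).
    move=> t ht; split.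
      rewrite -ball_normE /ball_ /=.
      have -> : z1 - (z + t%:C * (a0 - z)) = (1 - t)%:C * (z1 - z) + t%:C * (z1 - a0).
        by rewrite rmorphB /=; ring.
      exact: convex_norm.
    rewrite /unit_disk /=.
    have -> : z + t%:C * (a0 - z) = (1 - t)%:C * z + t%:C * a0.
      by rewrite rmorphB /=; ring.
    rewrite oneC; apply: convex_norm => //; rewrite -oneC //.
  by move=> y [by' Dy]; apply: Hbound.
apply: le_lt_trans lip _.
have Hn : `|a0 - z| <= `|z1 - a0| + `|z1 - z|.
  rewrite [`|z1 - a0|]distrC.
  have -> : a0 - z = (a0 - z1) + (z1 - z) by ring.
  exact: ler_normD.
have Hn' : cRe `|a0 - z| <= cRe `|z1 - a0| + cRe `|z1 - z|.
  by rewrite -lecR rmorphD /= -!normCE.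
have bz' : cRe `|z1 - z| < rho by rewrite -ltcR -normCE.
have Ba0' : cRe `|z1 - a0| < rho by rewrite -ltcR -normCE.
rewrite [`|a0 - z|]normCE eE -rmorphM ltcR.
have := nge0 (a0 - z).
set n := cRe `|a0 - z| in Hn' *.
move=> hn.
have : M * n <= M * (2 * rho) by apply: ler_wpM2l => //; lra.
nra.
Qed.

Local Close Scope complex_scope.

Theorem mainTheorem9 (R : realType) (w : C R -> C R) (z1 : C R) :
  analytic_on w (@unit_disk R) ->
  hard_singularity w z1 ->
  hard_singularity (angular_derivative w) z1.
Proof.
move=> Aw [[hz1 nreg] nlim].
split; last by move=> Hl; apply: nlim; exact: KL.
split => //.
move=> [r [g [r0 [Ag Eg]]]].
apply: nlim; apply: KL => //.
exists (g z1).
have gc : g @ nbhs z1 --> g z1.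
  apply: differentiable_continuous; apply/derivable1_diffP.
  by apply: Ag; apply: ballxx.
have gw : g @ within (@unit_disk R) (nbhs z1) --> g z1 by apply: cvg_within_filter.
apply: cvg_trans gw.
apply: near_eq_cvg.
rewrite near_withinE; apply/nbhs_ballP; exists r => //.
Qed.
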